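(* Let $X$ be a compact metric space and $f\colon X\to X$ a continuous map with finite topological entropy. Then for any $\Phi,\Psi\in C(X)^d$ satisfying condition (Q) and any $\xi\in C(X)$, the function $\alpha\mapsto\mathcal{S}(\alpha,\xi)$ is upper semi-continuous on $\mathbb{R}^d$ and continuous on the interior of $I(\Phi,\Psi)$.
   Context: $\mathcal{M}^f(X)$ is the set of $f$-invariant Borel probability measures; $P(\phi)$ the topological pressure on $X$. $\Phi=(\varphi_1,\dots,\varphi_d)$, $\Psi=(\psi_1,\dots,\psi_d)$, $\alpha*\Psi=(\alpha_i\psi_i)_i$, $\langle q,\Xi\rangle=\sum_iq_i\xi_i$. $\mathcal{S}(\alpha,\xi)=\inf_{q\in\mathbb{R}^d}P(\langle q,\Phi-\alpha*\Psi\rangle+\xi)\in\mathbb{R}\cup\{-\infty\}$. $I(\Phi,\Psi)=\left\{\left(\frac{\int\varphi_1d\mu}{\int\psi_1d\mu},\dots,\frac{\int\varphi_dd\mu}{\int\psi_dd\mu}\right)\mid\mu\in\mathcal{M}^f(X)\right\}$. Condition (Q): $\int\psi_i\,d\mu\ge0$ for every $\mu\in\mathcal{M}^f(X)$ and $1\le i\le d$, with strict inequality whenever $\int\varphi_i\,d\mu=0$. *)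

(* Defs.v *)
From HB Require Import structures.
From mathcomp Require Import all_boot all_order all_algebra.
From mathcomp Require Import all_classical all_reals all_analysis.
Set Implicit Arguments. Unset Strict Implicit. Unset Printing Implicit Defensive.
Import Order.TTheory GRing.Theory Num.Theory.
Import numFieldNormedType.Exports.
Local Open Scope classical_set_scope.
Local Open Scope ring_scope.

(** Nonempty metric spaces (a distinguished point is needed by the
    measure-theory library, whose measurable types are pointed). *)
#[short(type="pointedMetricType")]
HB.structure Definition PointedMetric (K : numDomainType) :=
  { M of Metric K M & Pointed M }.

Section Dyn.
Context {R : realType} {X : pointedMetricType R}.

Definition borel := g_sigma_algebraType (@open X).

Definition invariant (f : X -> X) (mu : probability borel R) : Prop :=
  forall A : set borel, measurable A -> mu ((f : borel -> borel) @^-1` A) = mu A.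

Definition integ (mu : probability borel R) (g : X -> R) : R :=
  fine (\int[mu]_(x in [set: borel]) (g x)%:E)%E.

Definition bowen_dist (f : X -> X) (n : nat) (x y : X) : R :=
  \big[Order.max/0]_(k < n) mdist (iter k f x) (iter k f y).

Definition separated (f : X -> X) (n : nat) (eps : R) (E : seq X) : Prop :=
  uniq E /\ forall x y, x \in E -> y \in E -> x != y -> eps < bowen_dist f n x y.

Definition birkhoff (f : X -> X) (phi : X -> R) (n : nat) (x : X) : R :=
  \sum_(k < n) phi (iter k f x).

Definition pressure_n (f : X -> X) (phi : X -> R) (n : nat) (eps : R) : \bar R :=
  ereal_sup [set ((n%:R)^-1 * ln (\sum_(x <- E) expR (birkhoff f phi n x)))%:E
            | E in [set E | separated f n eps E /\ E != [::]]].

Definition pressure_eps (f : X -> X) (phi : X -> R) (eps : R) : \bar R :=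
  limn_esup (fun n => pressure_n f phi n eps).

(** Topological pressure P(phi) = lim_{eps -> 0} P(phi, eps); since
    P(phi, eps) is nonincreasing in eps this limit is the supremum over eps > 0. *)
Definition pressure (f : X -> X) (phi : X -> R) : \bar R :=
  ereal_sup [set pressure_eps f phi eps | eps in [set eps : R | 0 < eps]].

Definition htop (f : X -> X) : \bar R := pressure f (fun _ => 0).

Context {d : nat}.

Definition Sfun (f : X -> X) (Phi Psi : 'I_d -> X -> R) (xi : X -> R)
    (alpha : 'rV[R]_d) : \bar R :=
  ereal_inf [set pressure f
      (fun x => \sum_(i < d) q ord0 i * (Phi i x - alpha ord0 i * Psi i x) + xi x)
    | q in [set: 'rV[R]_d]].

Definition Iset (f : X -> X) (Phi Psi : 'I_d -> X -> R) : set 'rV[R]_d :=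
  [set v | exists mu : probability borel R, invariant f mu /\
     forall i : 'I_d, integ mu (Psi i) != 0 /\
       v ord0 i = integ mu (Phi i) / integ mu (Psi i)].

Definition condQ (f : X -> X) (Phi Psi : 'I_d -> X -> R) : Prop :=
  forall mu : probability borel R, invariant f mu -> forall i : 'I_d,
    0 <= integ mu (Psi i) /\ (integ mu (Phi i) = 0 -> 0 < integ mu (Psi i)).

End Dyn.

Definition upper_semicontinuous {T : topologicalType} {R : numFieldType}
    (g : T -> \bar R) : Prop :=
  forall x (a : R), (g x < a%:E)%E -> exists2 V, nbhs x V & forall y, V y -> (g y < a%:E)%E.

(* Main.v *)
Require Import Defs.
From HB Require Import structures.
From mathcomp Require Import all_boot all_order all_algebra.
From mathcomp Require Import all_classical all_reals all_analysis.
From mathcomp Require Import measurable_realfun.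
From mathcomp Require Import ring lra.
Import Order.TTheory GRing.Theory Num.Theory.
Import numFieldNormedType.Exports.
Local Open Scope classical_set_scope.
Local Open Scope ring_scope.

Section P1.
Context {R : realType} {X : pointedMetricType R} (f : X -> X).

Lemma sum_exp_gt0 (E : seq X) (g : X -> R) : E != [::] ->
  0 < \sum_(x <- E) expR (g x).
Proof.
case: E => // a E _; rewrite big_cons.
by apply: ltr_pwDl; [exact: expR_gt0|apply: sumr_ge0 => i _; exact: expR_ge0].
Qed.

Lemma birkhoff_le (phi psi : X -> R) c n x : (forall y, phi y <= psi y + c) ->
  birkhoff f phi n x <= birkhoff f psi n x + n%:R * c.
Proof.
move=> h; rewrite /birkhoff.
have -> : n%:R * c = \sum_(k < n) c by rewrite sumr_const card_ord mulr_natl.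
by rewrite -big_split /=; apply: ler_sum => k _; exact: h.
Qed.

Lemma pn_shift (phi psi : X -> R) c n eps : (0 < n)%N ->
  (forall x, phi x <= psi x + c) ->
  (pressure_n f phi n eps <= pressure_n f psi n eps + c%:E)%E.
Proof.
move=> n0 h; apply: ub_ereal_sup => _ [E [sepE E0] <-].
apply: (@le_trans _ _ ((n%:R^-1 * ln (\sum_(x <- E) expR (birkhoff f psi n x)) + c)%:E)).
  rewrite lee_fin.
  have n0' : (0 < n%:R :> R) by rewrite ltr0n.
  have s1 := @sum_exp_gt0 E (birkhoff f phi n) E0.
  have s2 := @sum_exp_gt0 E (birkhoff f psi n) E0.
  have : \sum_(x <- E) expR (birkhoff f phi n x) <=
         expR (n%:R * c) * \sum_(x <- E) expR (birkhoff f psi n x).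
    rewrite mulr_sumr; apply: ler_sum => x _.
    by rewrite -expRD ler_expR addrC; exact: birkhoff_le.
  rewrite -(ler_ln s1) ?posrE; last by apply: mulr_gt0 => //; exact: expR_gt0.
  rewrite lnM ?posrE ?expR_gt0 // expRK => hle.
  rewrite -(ler_pM2l n0') mulrA mulfV ?gt_eqF // mul1r mulrDr mulrA mulfV ?gt_eqF //.
  by rewrite mul1r addrC.
rewrite EFinD leeD2r //; apply: ereal_sup_ubound; exists E => //.
Qed.

End P1.

Section P1b.
Context {R : realType}.
Local Open Scope ereal_scope.

Lemma limsup_shift (u v : (\bar R)^nat) (c : R) :
  (forall n, (0 < n)%N -> u n <= v n + c%:E) -> limn_esup u <= limn_esup v + c%:E.
Proof.
move=> h; rewrite !limn_esup_lim.
have h' m : (0 < m)%N -> esups u m <= esups v m + c%:E.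
  move=> m0; apply: ub_ereal_sup => _ [k /= mk <-].
  apply: le_trans (h k (leq_trans m0 mk)) _; rewrite leeD2r //.
  by apply: ereal_sup_ubound; exists k.
have cv : esups v \+ cst c%:E @ \oo --> limn (esups v) + c%:E.
  apply: cvgeD; [exact: fin_num_adde_defl|exact: is_cvg_esups|exact: cvg_cst].
rewrite -(cvg_lim _ cv) //; apply: lee_lim; [exact: is_cvg_esups|by apply/cvg_ex; eexists; exact: cv|].
by near=> m; apply: h'; near: m; exists 1%N.
Unshelve. all: by end_near. Qed.

Lemma limsup_ge (l : \bar R) (u : (\bar R)^nat) :
  (forall n, (0 < n)%N -> l <= u n) -> l <= limn_esup u.
Proof.
move=> h; rewrite limn_esup_lim; apply: lime_ge; first exact: is_cvg_esups.
near=> m; apply: le_trans (h m _) _; last by apply: ereal_sup_ubound; exists m => /=.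
by near: m; exists 1%N.
Unshelve. all: by end_near. Qed.

End P1b.

Section P1c.
Context {R : realType} {X : pointedMetricType R} (f : X -> X).

Lemma P_shift (phi psi : X -> R) c : (forall x, phi x <= psi x + c) ->
  (pressure f phi <= pressure f psi + c%:E)%E.
Proof.
move=> h; apply: ub_ereal_sup => _ [eps e0 <-].
apply: (@le_trans _ _ (pressure_eps f psi eps + c%:E)%E).
  by apply: limsup_shift => n n0; exact: pn_shift.
by rewrite leeD2r //; apply: ereal_sup_ubound; exists eps.
Qed.

Lemma pn_ge (phi : X -> R) n eps x : (0 < n)%N ->
  ((n%:R^-1 * birkhoff f phi n x)%:E <= pressure_n f phi n eps)%E.
Proof.
move=> n0; apply: ereal_sup_ubound; exists [:: x].
  split => //; split => // a b; rewrite !inE => /eqP -> /eqP ->.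
  by rewrite eqxx.
by rewrite big_seq1 expRK.
Qed.

Lemma P_ge (phi : X -> R) (l : R) :
  (forall n, (0 < n)%N -> exists x, l <= n%:R^-1 * birkhoff f phi n x) ->
  (l%:E <= pressure f phi)%E.
Proof.
move=> h; apply: (@le_trans _ _ (pressure_eps f phi 1)).
  apply: limsup_ge => n n0; have [x hx] := h n n0.
  apply: le_trans (pn_ge phi n 1 x n0); by rewrite lee_fin.
by apply: ereal_sup_ubound; exists 1 => //=.
Qed.

End P1c.

Section P2.
Context {R : realType} {X : pointedMetricType R}.

Definition bm (g : X -> R) := measurable_fun [set: @borel R X] (g : @borel R X -> R) /\
  exists M, forall x, `|g x| <= M.

Lemma cont_mfun (g : X -> R) : continuous g -> measurable_fun [set: @borel R X] (g : @borel R X -> R).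
Proof.
move=> /continuousP cg; apply: (measurability _ (RGenOpens.measurableE R)).
move=> _ [_ [a [b ->] <-]]; rewrite setTI; apply: sub_sigma_algebra.
exact/cg/interval_open.
Qed.

Lemma cont_bound (g : X -> R) : compact [set: X] -> continuous g ->
  exists M, forall x, `|g x| <= M.
Proof.
move=> cX cg.
have /ex_strict_bound_gt0[k k_gt0 /= hk] : bounded_set (g @` [set: X]).
  by apply/compact_bounded/continuous_compact => //; exact: continuous_subspaceT.
by exists k => x; apply/ltW/hk; exists x.
Qed.

Lemma cont_bm (g : X -> R) : compact [set: X] -> continuous g -> bm g.
Proof. by move=> cX cg; split; [exact: cont_mfun|exact: cont_bound]. Qed.

Lemma bmD g h : bm g -> bm h -> bm (fun x => g x + h x).
Proof.
move=> [mg [M hM]] [mh [N hN]]; split; first exact: measurable_funD.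
by exists (M + N) => x; apply: le_trans (ler_normD _ _) _; exact: lerD.
Qed.

Lemma bmZ c g : bm g -> bm (fun x => c * g x).
Proof.
move=> [mg [M hM]]; split.
  by apply: measurable_funM => //; exact: measurable_cst.
by exists (`|c| * M) => x; rewrite normrM; apply: ler_wpM2l.
Qed.

Lemma bm_cst c : bm (fun _ => c).
Proof. by split; [exact: measurable_cst|exists `|c|]. Qed.

Lemma bm_sum (I : Type) (s : seq I) (F : I -> X -> R) :
  (forall i, bm (F i)) -> bm (fun x => \sum_(i <- s) F i x).
Proof.
move=> h; elim: s => [|a s IH].
  by under eq_fun do rewrite big_nil; exact: bm_cst.
by under eq_fun do rewrite big_cons; exact: bmD.
Qed.

Variable mu : probability (@borel R X) R.

Lemma bm_int g : bm g -> mu.-integrable [set: @borel R X] (EFin \o (g : @borel R X -> R)).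
Proof.
move=> [mg [M hM]]; apply/integrableP; split; first exact/measurable_EFinP.
apply: (@le_lt_trans _ _ (\int[mu]_(x in [set: @borel R X]) (cst M%:E) x)%E).
  apply: ge0_le_integral => //; (try by move=> x _; rewrite /= lee_fin (le_trans _ (hM x)));
   (try by apply/measurable_EFinP; apply: measurableT_comp => //).
rewrite (integral_cst mu (@measurableT _ _)).
have h1 := probability_setT mu.
suff -> : (M%:E * mu [set: @borel R X] = M%:E)%E by rewrite ltry.
by rewrite -[in RHS](mule1 M%:E) -h1.
Qed.

Lemma integ_fin g : bm g -> (\int[mu]_(x in [set: @borel R X]) (g x)%:E)%E \is a fin_num.
Proof. by move=> bg; apply: integrable_fin_num => //; exact: bm_int. Qed.

Lemma integ_le g h : bm g -> bm h -> (forall x, g x <= h x) -> integ mu g <= integ mu h.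
Proof.
move=> bg bh gh; rewrite /integ; apply: fine_le; try exact: integ_fin.
by apply: le_integral => //; [exact: bm_int|exact: bm_int|move=> x _; rewrite lee_fin].
Qed.

Lemma integD g h : bm g -> bm h -> integ mu (fun x => g x + h x) = integ mu g + integ mu h.
Proof.
move=> bg bh; rewrite /integ -fineD; try exact: integ_fin.
congr fine; under eq_integral do rewrite EFinD.
by apply: integralD => //; exact: bm_int.
Qed.

Lemma integZ c g : bm g -> integ mu (fun x => c * g x) = c * integ mu g.
Proof.
move=> bg; rewrite /integ; under eq_integral do rewrite EFinM.
by rewrite integralZl //; [rewrite fineM // integ_fin|exact: bm_int].
Qed.

Lemma integ_cst c : integ mu (fun _ => c) = c.
Proof.
rewrite /integ (integral_cst mu (@measurableT _ _)).
have h1 := probability_setT mu.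
suff -> : (c%:E * mu [set: @borel R X] = c%:E)%E by [].
by rewrite -[in RHS](mule1 c%:E) -h1.
Qed.

Lemma integ_sum (I : Type) (s : seq I) (F : I -> X -> R) :
  (forall i, bm (F i)) -> integ mu (fun x => \sum_(i <- s) F i x) = \sum_(i <- s) integ mu (F i).
Proof.
move=> h; elim: s => [|a s IH].
  by under eq_fun do rewrite big_nil; rewrite big_nil integ_cst.
under eq_fun do rewrite big_cons; rewrite big_cons integD //; first by rewrite IH.
exact: bm_sum.
Qed.

End P2.

Section P3.
Context {R : realType} {X : pointedMetricType R} (f : X -> X).

Lemma cont_mfunT : continuous f ->
  measurable_fun [set: @borel R X] (f : @borel R X -> @borel R X).
Proof.
move=> /continuousP cf; apply: (@measurability _ _ (@borel R X) (@borel R X) setT f (@open X)) => //.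
move=> _ [A oA <-]; rewrite setTI; apply: sub_sigma_algebra; exact: cf.
Qed.

Lemma bm_comp g : continuous f -> bm g -> bm (fun x => g (f x)).
Proof.
move=> cf [mg [M hM]]; split; last by exists M.
exact: (measurableT_comp mg (cont_mfunT cf)).
Qed.

Lemma integ_inv (mu : probability (@borel R X) R) g : continuous f -> Defs.invariant f mu -> bm g ->
  integ mu (fun x => g (f x)) = integ mu g.
Proof.
move=> cf inv bg.
have mf := cont_mfunT cf.
have mgE : measurable_fun [set: @borel R X] (EFin \o (g : @borel R X -> R)).
  by apply/measurable_EFinP; case: bg.
have intg : mu.-integrable ((f : @borel R X -> @borel R X) @^-1` [set: @borel R X])
    ((EFin \o (g : @borel R X -> R)) \o (f : @borel R X -> @borel R X)).
  by rewrite preimage_setT; apply: bm_int; exact: bm_comp.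
have := @integral_pushforward _ _ (@borel R X) (@borel R X) R f mf mu setT
  (EFin \o (g : @borel R X -> R)) mgE intg measurableT.
rewrite (eq_measure_integral mu); last by move=> A mA _; exact: inv.
rewrite preimage_setT /integ => ->; by [].
Qed.

Lemma integ_birkhoff (mu : probability (@borel R X) R) g n : continuous f ->
  Defs.invariant f mu -> bm g -> integ mu (birkhoff f g n) = n%:R * integ mu g.
Proof.
move=> cf inv bg.
have bk k : bm (fun x => g (iter k f x)).
  elim: k => [|k IH] //=.
  have := bm_comp (fun x => g (iter k f x)) cf IH.
  by under eq_fun do rewrite -iterSr.
have ik k : integ mu (fun x => g (iter k f x)) = integ mu g.
  elim: k => [|k IH] //.
  rewrite -IH -(integ_inv mu _ cf inv (bk k)).
  by congr integ; apply: funext => x; rewrite iterSr.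
rewrite /birkhoff (@integ_sum R X mu _ _ (fun (k : 'I_n) x => g (iter k f x))); last by move=> k; exact: bk.
under eq_bigr do rewrite ik.
by rewrite sumr_const card_ord mulr_natl.
Qed.

End P3.

Section P4.
Context {R : realType} {X : pointedMetricType R} (f : X -> X).

Lemma cont_sum (I : Type) (s : seq I) (F : I -> X -> R) :
  (forall i, continuous (F i)) -> continuous (fun x => \sum_(i <- s) F i x).
Proof.
move=> h; elim: s => [|a s IH].
  by under eq_fun do rewrite big_nil; exact: cst_continuous.
under eq_fun do rewrite big_cons.
by move=> x; exact: (continuousD (h a x) (IH x)).
Qed.

Lemma cont_iter k : continuous f -> continuous (iter k f).
Proof.
move=> cf; elim: k => [|k IH] /=; first by move=> x.
by move=> x; exact: (continuous_comp (IH x) (cf _)).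
Qed.

Lemma cont_birkhoff (g : X -> R) n : continuous f -> continuous g ->
  continuous (birkhoff f g n).
Proof.
move=> cf cg; rewrite /birkhoff; apply: cont_sum => k x.
exact: (continuous_comp (cont_iter k cf x) (cg _)).
Qed.

Lemma P_ge_int (mu : probability (@borel R X) R) (g : X -> R) :
  compact [set: X] -> continuous f -> Defs.invariant f mu -> continuous g ->
  ((integ mu g)%:E <= pressure f g)%E.
Proof.
move=> cX cf inv cg; apply: P_ge => n n0.
have cb := cont_birkhoff g n cf cg.
have [x0 _ hx0] := @compact_EVT_max _ _ (birkhoff f g n) [set: X]
  (ex_intro _ point I) cX (continuous_subspaceT cb).
exists x0.
have n0' : (0 < n%:R :> R) by rewrite ltr0n.
rewrite ler_pdivlMl // -(integ_birkhoff f mu g n cf inv (cont_bm g cX cg)).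
rewrite -[X in _ <= X](integ_cst mu).
apply: integ_le; [exact: cont_bm|exact: bm_cst|].
by move=> x; apply: hx0; rewrite inE.
Qed.

End P4.

Section P5.
Context {R : realType}.

Lemma fin_unif (T : finType) (P : T -> R -> Prop) :
  (forall t c c', 0 < c' -> c' <= c -> P t c -> P t c') ->
  (forall t, exists c, 0 < c /\ P t c) -> exists c, 0 < c /\ forall t, P t c.
Proof.
move=> mono h.
suff [c [c0 hc]] : exists c, 0 < c /\ forall t, t \in enum T -> P t c.
  by exists c; split => // t; apply: hc; rewrite mem_enum.
elim: (enum T) => [|a s [c [c0 hc]]]; first by exists 1.
have [c1 [c10 hc1]] := h a.
exists (Num.min c c1); split; first by rewrite lt_min c0 c10.
move=> t; rewrite inE => /orP[/eqP ->|ts].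
  by apply: mono hc1; rewrite ?lt_min ?c0 ?c10 ?ge_min ?lexx ?orbT.
by apply: (mono _ c); rewrite ?lt_min ?c0 ?c10 ?ge_min ?lexx //; exact: hc.
Qed.

Lemma fin_bound (T : finType) (P : T -> R -> Prop) :
  (forall t c c', c <= c' -> P t c -> P t c') ->
  (forall t, exists c, P t c) -> exists c, 1 <= c /\ forall t, P t c.
Proof.
move=> mono h.
suff [c [c0 hc]] : exists c, 1 <= c /\ forall t, t \in enum T -> P t c.
  by exists c; split => // t; apply: hc; rewrite mem_enum.
elim: (enum T) => [|a s [c [c0 hc]]]; first by exists 1.
have [c1 hc1] := h a.
exists (Num.max c c1); split; first by rewrite le_max c0.
move=> t; rewrite inE => /orP[/eqP ->|ts].
  by apply: mono hc1; rewrite le_max lexx orbT.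
by apply: (mono _ c); [rewrite le_max lexx|exact: hc].
Qed.

Lemma term_le (q a a' eta B p : R) : `|a - a'| <= eta -> `|p| <= B ->
  q * (a' * p) <= q * (a * p) + eta * B * `|q|.
Proof.
move=> ha hp.
have e : q * (a' * p) = q * (a * p) + (- (q * (a - a') * p)) by ring.
rewrite e lerD2l.
apply: (le_trans (ler_norm _)); rewrite normrN !normrM.
rewrite [eta * B * _]mulrC mulrA; apply: ler_pM => //.
by apply: ler_pM.
Qed.

Lemma sign_term (q al a' dl bet c ps : R) : 0 < dl -> 0 < c -> c <= ps ->
  `|al - a'| <= dl / 2 ->
  bet = al + (if 0 <= q then dl else - dl) ->
  `|q| * (dl / 2) * c <= q * (bet - a') * ps.
Proof.
move=> d0 c0 cps ha ->.
have h1 : `|q| * (dl / 2) <= q * (al + (if 0 <= q then dl else - dl) - a').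
  move: ha; rewrite ler_norml => /andP[h3 h4].
  case: ifP => hq.
    by rewrite ger0_norm //; nra.
  move/negbT: hq; rewrite -ltNge => hq.
  by rewrite ltr0_norm //; nra.
have h2 : 0 <= `|q| * (dl / 2) by apply: mulr_ge0 => //; lra.
apply: ler_pM => //; lra.
Qed.

End P5.

Lemma eshift {R : realType} (x c : R) (P : \bar R) : (x%:E <= P + c%:E)%E -> ((x - c)%:E <= P)%E.
Proof. case: P => [p| |] //=; rewrite ?lee_fin ?leey //; first by move=> h; rewrite lerBlDr. Qed.

Lemma ltW_helper {R : realType} (x : R) : 0 <= x -> x != 0 -> 0 < x.
Proof. by move=> h1 h2; rewrite lt_neqAle eq_sym h2. Qed.

Section P6.
Context {R : realType} {X : pointedMetricType R} (f : X -> X) (d : nat)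
  (Phi Psi : 'I_d -> X -> R) (xi : X -> R).
Hypotheses (cX : compact [set: X]) (cf : continuous f)
  (cPhi : forall i, continuous (Phi i)) (cPsi : forall i, continuous (Psi i))
  (cxi : continuous xi).

Definition phiq (q a : 'rV[R]_d) := fun x =>
  \sum_(i < d) q ord0 i * (Phi i x - a ord0 i * Psi i x) + xi x.
Definition qn (q : 'rV[R]_d) := \sum_(i < d) `|q ord0 i|.

Lemma SfunE a : Sfun f Phi Psi xi a =
  ereal_inf [set pressure f (phiq q a) | q in [set: 'rV[R]_d]].
Proof. by []. Qed.

Lemma qn_ge0 q : 0 <= qn q.
Proof. by apply: sumr_ge0 => i _. Qed.

Lemma PsiB : exists B, 1 <= B /\ forall i x, `|Psi i x| <= B.
Proof.
apply: (@fin_bound _ _ (fun i c => forall x, `|Psi i x| <= c)).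
  by move=> i c c' cc' h x; apply: le_trans (h x) cc'.
by move=> i; apply: cont_bound.
Qed.

Lemma ptw (q a a' : 'rV[R]_d) (eta B : R) : (forall i x, `|Psi i x| <= B) ->
  (forall i, `|a ord0 i - a' ord0 i| <= eta) ->
  forall x, phiq q a' x <= phiq q a x + eta * B * qn q.
Proof.
move=> hB ha x; rewrite /phiq /qn.
rewrite -addrA [xi x + _]addrC addrA lerD2r mulr_sumr -big_split /=.
apply: ler_sum => i _.
have := @term_le _ (q ord0 i) (a' ord0 i) (a ord0 i) _ _ _ (ltac:(by rewrite distrC; exact: ha i)) (hB i x).
move=> h; rewrite !mulrBr -addrA lerD2l; lra.
Qed.

Lemma cont_phiq q a : continuous (phiq q a).
Proof.
have h1 : continuous (fun y => \sum_(i < d) q ord0 i * (Phi i y - a ord0 i * Psi i y)).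
  apply: cont_sum => i y.
  apply: cvgM; first exact: cvg_cst.
  apply: cvgB; first exact: cPhi.
  by apply: cvgM; [exact: cvg_cst|exact: cPsi].
by move=> x; exact: (continuousD (h1 x) (cxi x)).
Qed.

Lemma egap (P : \bar R) (a C : R) : 0 <= C -> (P < a%:E)%E ->
  exists r, 0 < r /\ (P + (r * C)%:E < a%:E)%E.
Proof.
move=> C0; case: P => [p| |] //= h.
  rewrite lte_fin in h.
  exists ((a - p) / (C + 1)); split; first by apply: divr_gt0; lra.
  rewrite -EFinD lte_fin.
  have e : (a - p) / (C + 1) * (C + 1) = a - p by rewrite divfK //; lra.
  have : 0 < (a - p) / (C + 1) by apply: divr_gt0; lra.
  nra.
by exists 1; split.
Qed.

Lemma usc : upper_semicontinuous (Sfun f Phi Psi xi).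
Proof.
move=> a0 a h; rewrite SfunE in h.
have [_ [q _ <-] hq] := ereal_inf_lt h.
have [B [B1 hB]] := PsiB.
have [r [r0 hr]] := @egap _ _ (B * qn q) (mulr_ge0 (le_trans ler01 B1) (qn_ge0 q)) hq.
exists (ball a0 r); first exact: nbhsx_ballx.
move=> y [_ hy]; rewrite SfunE.
apply: le_lt_trans (ereal_inf_lbound _) _; first by exists q.
apply: le_lt_trans hr.
rewrite mulrA; apply: P_shift; apply: ptw => // i.
by apply: ltW; have := hy ord0 i; rewrite /ball /=.
Qed.


Lemma integ_lin (mu : probability (@borel R X) R) (g h : X -> R) c : bm g -> bm h ->
  integ mu (fun x => g x - c * h x) = integ mu g - c * integ mu h.
Proof.
move=> bg bh.
have -> : (fun x => g x - c * h x) = (fun x => g x + (-c) * h x).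
  by apply: funext => x; rewrite mulNr.
by rewrite integD ?integZ ?mulNr //; exact: bmZ.
Qed.

Lemma integ_phiq (mu : probability (@borel R X) R) q a : integ mu (phiq q a) =
  \sum_(i < d) q ord0 i * (integ mu (Phi i) - a ord0 i * integ mu (Psi i)) + integ mu xi.
Proof.
have bt i : bm (fun x => Phi i x - a ord0 i * Psi i x).
  apply: cont_bm => // y; apply: cvgB; first exact: cPhi.
  by apply: cvgM; [exact: cvg_cst|exact: cPsi].
rewrite /phiq integD; first last.
- exact: cont_bm.
- by apply: bm_sum => i; exact: bmZ.
rewrite (@integ_sum R X mu _ _ (fun (i : 'I_d) x => q ord0 i * (Phi i x - a ord0 i * Psi i x))); last first.
  by move=> i; exact: bmZ.
congr (_ + _); apply: eq_bigr => i _.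
by rewrite integZ // integ_lin //; exact: cont_bm.
Qed.

Hypothesis hQ : condQ f Phi Psi.

Lemma coerce alpha Mx : (forall x, `|xi x| <= Mx) -> interior (Iset f Phi Psi) alpha ->
  exists kap dl2, 0 < kap /\ 0 < dl2 /\ forall (q a' : 'rV[R]_d),
   (forall i, `|alpha ord0 i - a' ord0 i| <= dl2) ->
   ((kap * qn q - Mx)%:E <= pressure f (phiq q a'))%E.
Proof.
move=> hM /nbhs_ballP [e /= e0 he].
pose dl := e / 2.
have dl0 : 0 < dl by apply: divr_gt0.
pose Pm (s : {ffun 'I_d -> bool}) (c : R) := exists mu : probability (@borel R X) R,
  Defs.invariant f mu /\ forall i, c <= integ mu (Psi i) /\
  integ mu (Phi i) = (alpha ord0 i + (if s i then dl else - dl)) * integ mu (Psi i).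
have key s : exists c, 0 < c /\ Pm s c.
  pose bet : 'rV[R]_d := \row_i (alpha ord0 i + (if s i then dl else - dl)).
  have : Iset f Phi Psi bet.
    apply: he; split => // i j; rewrite [i]ord1 /ball /= mxE.
    rewrite opprD addrA subrr sub0r normrN.
by case: (s j); rewrite ?normrN gtr0_norm //; rewrite /dl; lra.
  move=> [mu [inv hmu]].
  have [c [c0 hc]] := @fin_unif _ _ (fun i c => c <= integ mu (Psi i))
    (fun i c c' _ le h => le_trans le h)
    (fun i => ex_intro _ (integ mu (Psi i)) (conj
      (let: conj h1 _ := hQ mu inv i in
       let: conj hn _ := hmu i in
       @ltW_helper _ _ h1 hn) (lexx _))).
  exists c; split => //; exists mu; split => // i; split => //.
  have [hn hv] := hmu i.
  have -> : alpha ord0 i + (if s i then dl else - dl) =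
    integ mu (Phi i) / integ mu (Psi i) by rewrite -hv mxE.
  by rewrite divfK.
have [c [c0 hc]] := @fin_unif _ _ Pm
  (fun s c c' _ le h => let: ex_intro mu (conj inv hh) := h in
     ex_intro _ mu (conj inv (fun i => let: conj h1 h2 := hh i in
       conj (le_trans le h1) h2))) key.
exists (dl / 2 * c), (dl / 2); split; first by apply: mulr_gt0 => //; lra.
split; first lra.
move=> q a' ha.
have [mu [inv hmu]] := hc [ffun i => 0 <= q ord0 i].
apply: le_trans (P_ge_int f mu (phiq q a') cX cf inv (cont_phiq q a')).
rewrite lee_fin integ_phiq.
apply: lerD.
- rewrite /qn mulr_sumr; apply: ler_sum => i _.
  have [h1 h2] := hmu i; rewrite h2 ffunE -mulrBl mulrA.
  have := @sign_term _ (q ord0 i) (alpha ord0 i) (a' ord0 i) dl _ c _ dl0 c0 h1 (ha i) erefl.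
  have ee : dl / 2 * c * `|q ord0 i| = `|q ord0 i| * (dl / 2) * c by ring.
  by rewrite ee.
- rewrite -[X in X <= _](integ_cst mu); apply: integ_le; [exact: bm_cst|exact: cont_bm|].
  by move=> x; have := hM x; rewrite ler_norml => /andP[].
Qed.

Lemma cont_at alpha : (htop f < +oo)%E -> interior (Iset f Phi Psi) alpha ->
  {for alpha, continuous (Sfun f Phi Psi xi)}.
Proof.
move=> hfin hint.
have [Mx hMx] := cont_bound xi cX cxi.
have [B [B1 hB]] := PsiB.
have [kap [dl2 [kap0 [dl20 hco]]]] := coerce alpha Mx hMx hint.
have Sge : ((- Mx)%:E <= Sfun f Phi Psi xi alpha)%E.
  rewrite SfunE; apply: le_ereal_inf_tmp => _ [q _ <-].
  apply: le_trans (hco q alpha _); last by move=> i; rewrite subrr normr0 ltW.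
  rewrite lee_fin; have := qn_ge0 q; nra.
have Sle : (Sfun f Phi Psi xi alpha <= htop f + Mx%:E)%E.
  rewrite SfunE; apply: le_trans (ereal_inf_lbound _) _; first by exists 0.
  apply: P_shift => x; rewrite /phiq big1; last by move=> i _; rewrite mxE mul0r.
  by have := hMx x; rewrite ler_norml => /andP[_ h]; lra.
have Sfin : Sfun f Phi Psi xi alpha \is a fin_num.
  apply/fin_numPlt/andP; split.
    by apply: lt_le_trans Sge; exact: ltNyr.
  exact: (le_lt_trans Sle (lte_add_pinfty hfin (ltry _))).
set s := fine (Sfun f Phi Psi xi alpha).
have Se : Sfun f Phi Psi xi alpha = s%:E by rewrite /s fineK.
have key e : 0 < e -> \forall y \near alpha,
    ((s - e)%:E <= Sfun f Phi Psi xi y)%E /\ (Sfun f Phi Psi xi y < (s + e)%:E)%E.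
  move=> e0.
  have [V hV hVlt] := usc alpha (s + e) (ltac:(by rewrite Se lte_fin; lra) :
    (Sfun f Phi Psi xi alpha < (s + e)%:E)%E).
  pose eta := Num.min dl2 (kap * e / (B * (`|s| + Mx + 1))).
  have Mx0 : 0 <= Mx by apply: le_trans (hMx point); exact: normr_ge0.
  have B0 : 0 < B by lra.
  have den0 : 0 < B * (`|s| + Mx + 1).
    by apply: mulr_gt0 => //; have := normr_ge0 s; lra.
  have eta0 : 0 < eta.
    by rewrite lt_min dl20 /=; apply: divr_gt0 => //; apply: mulr_gt0.
  have H2 : \forall y \near alpha, ((s - e)%:E <= Sfun f Phi Psi xi y)%E.
    apply: filterS (nbhsx_ballx alpha eta eta0) => y [_ hy].
    have ha i : `|alpha ord0 i - y ord0 i| <= eta.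
      by apply: ltW; have := hy ord0 i; rewrite /ball /=.
    rewrite SfunE; apply: le_ereal_inf_tmp => _ [q _ <-].
    have [hq|hq] := leP (eta * B * qn q) e.
    - apply: (@le_trans _ _ ((s - eta * B * qn q)%:E)); first by rewrite lee_fin; lra.
      apply: eshift; rewrite -Se.
      have hp : (pressure f (phiq q alpha) <=
          pressure f (phiq q y) + (eta * B * qn q)%:E)%E.
        by apply: P_shift; apply: ptw => // i; rewrite distrC.
      apply: le_trans hp.
      by rewrite SfunE; apply: ereal_inf_lbound; exists q.
    - apply: le_trans (hco q y _); last first.
        by move=> i; apply: le_trans (ha i) _; rewrite ge_min lexx.
      rewrite lee_fin.
      have h1 : eta * (B * (`|s| + Mx + 1)) <= kap * e.
        by rewrite -ler_pdivlMr // /eta ge_min lexx orbT.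
      have hs : s <= `|s| by exact: ler_norm.
      have hqn := qn_ge0 q.
      have : eta * B * (`|s| + Mx + 1) < eta * B * (kap * qn q).
        have : kap * e < kap * (eta * B * qn q) by rewrite ltr_pM2l.
        nra.
      rewrite ltr_pM2l; last by apply: mulr_gt0.
      nra.
  apply: filterS2 H2 hV => y h2 hy; split => //; exact: hVlt.
rewrite /prop_for /continuous_at Se; apply: (proj2 (@fine_cvgP R _ (nbhs alpha) _ _ s)); split.
  have k1 : \forall y \near nbhs alpha, ((s - 1)%:E <= Sfun f Phi Psi xi y)%E /\
      (Sfun f Phi Psi xi y < (s + 1)%:E)%E := key 1 ltr01.
  apply: filterS k1 => y [h1 h2].
  apply/fin_numPlt/andP; split.
    exact: (lt_le_trans (ltNyr _) h1).
  exact: (lt_trans h2 (ltry _)).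
apply/cvgrPdist_lt => e e0.
have k2 : \forall y \near nbhs alpha, ((s - e / 2)%:E <= Sfun f Phi Psi xi y)%E /\
      (Sfun f Phi Psi xi y < (s + e / 2)%:E)%E := key (e / 2) (divr_gt0 e0 (ltr0Sn _ 1)).
apply: filterS k2 => y [h1 h2].
have fy : Sfun f Phi Psi xi y \is a fin_num.
  apply/fin_numPlt/andP; split.
    exact: (lt_le_trans (ltNyr _) h1).
  exact: (lt_trans h2 (ltry _)).
move: h1 h2; rewrite -(fineK fy) lee_fin lte_fin /= => h1 h2.
rewrite ltr_norml; apply/andP; split; lra.
Qed.

End P6.

Theorem proposition2p4 (R : realType) (X : pointedMetricType R) (f : X -> X)
    (d : nat) (Phi Psi : 'I_d -> X -> R) (xi : X -> R) :
  compact [set: X] ->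
  continuous f ->
  (htop f < +oo)%E ->
  (forall i, continuous (Phi i)) ->
  (forall i, continuous (Psi i)) ->
  continuous xi ->
  condQ f Phi Psi ->
  upper_semicontinuous (Sfun f Phi Psi xi) /\
  (forall alpha : 'rV[R]_d, interior (Iset f Phi Psi) alpha ->
     {for alpha, continuous (Sfun f Phi Psi xi)}).
Proof.
move=> cX cf hfin cPhi cPsi cxi hQ; split.
  by apply: usc; assumption.
move=> alpha hint; apply: cont_at; assumption.
Qed.
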